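(* Let $x\in\{\text{stage},\text{stage2}\}$ (credulous mode, i.e. the semantics $\sigma_x$ itself). Then there exist argumentation frameworks $AF=(AR,Attacks)$ and $AF'=(AR',Attacks')$ with $AF\preceq_N AF'$ such that the following statement does NOT hold: $$\forall E\in\sigma_x(AF)\ \exists E'\in\sigma_x(AF') \text{ such that } (E'\not\subseteq AR\ \lor\ E'=E).$$
   Context: An argumentation framework is a pair $AF=(AR,Attacks)$ with $AR$ a finite set and $Attacks\subseteq AR\times AR$; $a$ attacks $b$ iff $(a,b)\in Attacks$; a set $S$ attacks $b$ iff some element of $S$ attacks $b$. An argumentation semantics $\sigma$ assigns to each $AF$ a set $\sigma(AF)$ of subsets of $AR$. $AF\preceq_N AF'$ (normal expansion) iff $AR\subseteq AR'$, $Attacks\subseteq Attacks'$ and no $(a,b)\in Attacks'\setminus Attacks$ has $a,b\in AR$. $S$ is conflict-free iff no element of $S$ attacks an element of $S$; $S^+=\{b:\text{some } a\in S\text{ attacks } b\}$. A stage extension is a conflict-free $S$ such that no conflict-free $S'$ has $S'\cup S'^+\supsetneq S\cup S^+$. Attack sequence: $\langle a_1,\dots,a_n\rangle$ of pairwise distinct arguments with $(a_i,a_{i+1})\in Attacks$; $b$ is reachable from $a$ iff such a sequence has $a_1=a,a_n=b$. SCCs: maximal sets of mutually reachable arguments; $SCCS_{AF}$ is the set of them. $AF\downarrow_S=(S,Attacks\cap(S\times S))$. For an SCC $S$ and $E\subseteq AR$: $S^-_{out}=\{a\notin S: a\text{ attacks some element of }S\}$; $D_{AF}(S,E)=\{a\in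 S: E\cap S^-_{out}\text{ attacks }a\}$; $P_{AF}(S,E)=\{a\in S: E\cap S^-_{out}\text{ does not attack }a\text{ and }\exists b\in S^-_{out}\text{ attacking }a\text{ such that }E\text{ does not attack }b\}$; $UP_{AF}(S,E)=S\setminus D_{AF}(S,E)$. Stage2: $E$ is a stage2 extension of $AF$ iff either $|SCCS_{AF}|=1$ and $E$ is a stage extension of $AF$, or $|SCCS_{AF}|>1$ and for every $S\in SCCS_{AF}$, $E\cap S$ is a stage2 extension of $AF\downarrow_{UP_{AF}(S,E)}$. $\sigma_x(AF)$ is the set of all $x$-extensions. *)

(* Defs.v *)
From mathcomp Require Import all_boot.
Set Implicit Arguments. Unset Strict Implicit. Unset Printing Implicit Defensive.

Record AF (T : finType) := mkAF { args : {set T}; att : {set T * T} }.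

Section AFDefs.
Variable T : finType.
Implicit Types (F G : AF T) (S E : {set T}) (a b : T).

Definition wf_AF F : Prop :=
  forall a b, (a, b) \in att F -> (a \in args F) && (b \in args F).

Definition attacks F a b : bool := (a, b) \in att F.
Definition set_attacks F S b : bool := [exists a in S, attacks F a b].

Definition normal_exp F G : Prop :=
  [/\ args F \subset args G, att F \subset att G &
      forall a b, (a, b) \in att G -> (a, b) \notin att F ->
        ~ ((a \in args F) && (b \in args F))].

Definition conflict_free F S : Prop :=
  forall a b, a \in S -> b \in S -> ~~ attacks F a b.

Definition range F S : {set T} := S :|: [set b | set_attacks F S b].

Definition stage F S : Prop :=
  S \subset args F /\ conflict_free F S /\
  ~ (exists S', S' \subset args F /\ conflict_free F S' /\ range F S \proper range F S').

Definition reachable F a b : Prop :=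
  exists s : seq T, [/\ a \in args F, all (fun x => x \in args F) s,
    path (attacks F) a s, uniq (a :: s) & last a s = b].

Definition mutually_reachable F S : Prop :=
  S \subset args F /\ forall a b, a \in S -> b \in S -> reachable F a b /\ reachable F b a.

Definition is_SCC F S : Prop :=
  mutually_reachable F S /\
  forall S', mutually_reachable F S' -> S \subset S' -> S' = S.

Definition restrict F S : AF T :=
  mkAF S [set p in att F | (p.1 \in S) && (p.2 \in S)].

Definition S_out F S : {set T} :=
  [set a in args F | (a \notin S) && [exists b in S, attacks F a b]].

Definition D_AF F S E : {set T} := [set a in S | set_attacks F (E :&: S_out F S) a].
Definition UP_AF F S E : {set T} := S :\: D_AF F S E.

Inductive stage2 : AF T -> {set T} -> Prop :=
| stage2_one F E :
    (exists S, is_SCC F S /\ forall S', is_SCC F S' -> S' = S) ->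
    stage F E -> stage2 F E
| stage2_many F E :
    (exists S1 S2, [/\ is_SCC F S1, is_SCC F S2 & S1 <> S2]) ->
    E \subset args F ->
    (forall S, is_SCC F S -> stage2 (restrict F (UP_AF F S E)) (E :&: S)) ->
    stage2 F E.

End AFDefs.

Inductive semantics := Sem_stage | Sem_stage2.

Definition sigma (x : semantics) (T : finType) (F : AF T) (E : {set T}) : Prop :=
  match x with Sem_stage => stage F E | Sem_stage2 => stage2 F E end.

(* Main.v *)
Require Import Defs.
From mathcomp Require Import all_boot.
Set Implicit Arguments. Unset Strict Implicit. Unset Printing Implicit Defensive.

Section Gen.
Variable T : finType.
Implicit Types (F : AF T) (S E : {set T}).

Definition cfb F S := [forall a in S, forall b in S, ~~ attacks F a b].
Lemma cfP F S : conflict_free F S <-> cfb F S.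
Proof.
split.
- move=> H; apply/forallP=> a; apply/implyP=> Ha; apply/forallP=> b; apply/implyP=> Hb.
  exact: H.
- move=> /forallP H a b Ha Hb. move: (H a); rewrite Ha /= => /forallP /(_ b).
  by rewrite Hb.
Qed.

Definition stageb F S := [&& S \subset args F, cfb F S &
  ~~ [exists S' : {set T}, [&& S' \subset args F, cfb F S' & range F S \proper range F S']]].

Lemma stageP F S : stage F S <-> stageb F S.
Proof.
split.
- case=> [H1 [H2 H3]]; rewrite /stageb H1 /=; apply/andP; split; first exact/cfP.
  apply/negP=> /existsP [S' /and3P [A B C]]; apply: H3; exists S'; split=> //; split=> //.
  exact/cfP.
- case/and3P=> H1 H2 /negP H3; split=> //; split; first exact/cfP.
  case=> S' [A [B C]]; apply: H3; apply/existsP; exists S'; rewrite A C andbT /=.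
  exact/cfP.
Qed.

Lemma reach0 F a : a \in args F -> reachable F a a.
Proof. by move=> Ha; exists [::]. Qed.

Lemma is_SCC_all F : mutually_reachable F (args F) ->
  is_SCC F (args F) /\ forall S', is_SCC F S' -> S' = args F.
Proof.
move=> Hm; split.
- split=> // S' [H _] Hs; apply/eqP; rewrite eqEsubset H Hs //.
- move=> S' [[Hs _] Hmax]; symmetry; apply: Hmax=> //.
Qed.

Lemma stage2_single F E : mutually_reachable F (args F) ->
  (stage2 F E <-> stage F E).
Proof.
move=> Hm; have [H1 H2] := is_SCC_all Hm; split.
- move=> H; case: H H2 => [G E' _ Hs //|G E' [S1 [S2 [A B C]]] _ _ H2].
  by exfalso; apply: C; rewrite (H2 _ A) (H2 _ B).
- move=> H; apply: stage2_one=> //; by exists (args F).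
Qed.
End Gen.


Lemma range_sub (T : finType) (F : AF T) (S : {set T}) : wf_AF F -> S \subset args F ->
  range F S \subset args F.
Proof.
move=> Hw HS; apply/subsetP=> x; rewrite !inE => /orP[Hx|/existsP[y /andP[_ Hy]]].
- exact: (subsetP HS).
- by case/andP: (Hw _ _ Hy).
Qed.

Definition a0 : 'I_3 := @Ordinal 3 0 isT.
Definition a1 : 'I_3 := @Ordinal 3 1 isT.
Definition a2 : 'I_3 := @Ordinal 3 2 isT.

Lemma I3cases (x : 'I_3) : [\/ x = a0, x = a1 | x = a2].
Proof.
case: x => [[|[|[|n]]] Hn].
- by constructor 1; apply: val_inj.
- by constructor 2; apply: val_inj.
- by constructor 3; apply: val_inj.
- by [].
Qed.

Definition F0 : AF 'I_3 := mkAF [set a0; a1] [set (a0,a1); (a1,a0)].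
Definition F1 : AF 'I_3 := mkAF [set a0; a1; a2]
  [set (a0,a1); (a1,a0); (a0,a2); (a2,a0); (a2,a2)].

Ltac orsplit_h := first [ by move/eqP => [-> ->] | by move/eqP => -> | case/orP; [orsplit_h | orsplit_h] ].
Ltac orsplit := rewrite !inE; orsplit_h.

Lemma wf0 : wf_AF F0.
Proof. by move=> a b; orsplit. Qed.
Lemma wf1 : wf_AF F1.
Proof. by move=> a b; orsplit. Qed.

Lemma ne01 : normal_exp F0 F1.
Proof.
split.
- apply/subsetP=> x; rewrite !inE; by case/orP=> /eqP ->.
- apply/subsetP=> [[x y]]; orsplit.
- move=> a b; orsplit.
Qed.

Ltac rch s := exists s; by split; rewrite /= /attacks ?inE.

Lemma mr0 : mutually_reachable F0 (args F0).
Proof.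
split=> // a b Ha Hb.
case: (I3cases a) Ha => -> Ha; case: (I3cases b) Hb => -> Hb //; split;
  try (by move: Ha; rewrite !inE); try (by move: Hb; rewrite !inE).
all: first [rch (@nil 'I_3) | rch [:: a0] | rch [:: a1]].
Qed.

Lemma mr1 : mutually_reachable F1 (args F1).
Proof.
split=> // a b Ha Hb.
case: (I3cases a) Ha => -> Ha; case: (I3cases b) Hb => -> Hb; split.
all: first [rch (@nil 'I_3) | rch [:: a0] | rch [:: a1] | rch [:: a2]
           | rch [:: a0; a1] | rch [:: a0; a2]].
Qed.

Lemma st0 : stage F0 [set a1].
Proof.
split; first by apply/subsetP=> x; rewrite !inE => /eqP->.
split; first by move=> a b; rewrite !inE => /eqP-> /eqP->; rewrite /attacks /= !inE.
case=> S' [HS' [_ Hp]]; move: Hp; rewrite properE => /andP[_ /negP]; apply.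
apply: subset_trans (range_sub wf0 HS') _.
apply/subsetP=> x; rewrite /= !inE => /orP[] /eqP->; rewrite /range ?inE //.
apply/orP; right; apply/existsP; exists a1; by rewrite !inE /attacks /= !inE.
Qed.

Lemma st1 E : stage F1 E -> E = [set a0].
Proof.
case=> HS [Hcf Hno].
have n2 : a2 \notin E.
  by apply/negP=> H; move: (Hcf _ _ H H); rewrite /attacks /= !inE.
case: (boolP (a0 \in E)) => H0.
- have n1 : a1 \notin E.
    by apply/negP=> H; move: (Hcf _ _ H0 H); rewrite /attacks /= !inE.
  apply/setP=> x; rewrite !inE; case: (I3cases x) => ->.
  + by rewrite H0.
  + by rewrite (negbTE n1).
  + by rewrite (negbTE n2).
- exfalso; apply: Hno; exists [set a0]; split.
    by apply/subsetP=> x; rewrite !inE => /eqP->.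
  split; first by move=> a b; rewrite !inE => /eqP-> /eqP->; rewrite /attacks /= !inE.
  rewrite properE; apply/andP; split.
  + apply: subset_trans (range_sub wf1 HS) _.
    apply/subsetP=> x; case: (I3cases x) => -> _; rewrite /range ?inE //.
    * apply/orP; right; apply/existsP; exists a0; by rewrite !inE /attacks /= !inE.
    * apply/orP; right; apply/existsP; exists a0; by rewrite !inE /attacks /= !inE.
  + apply/negP=> /subsetP /(_ a2) H.
    have : a2 \in range F1 E.
      apply: H; rewrite /range !inE; apply/orP; right; apply/existsP; exists a0.
      by rewrite !inE /attacks /= !inE.
    rewrite /range !inE (negbTE n2) /=; case/existsP => y /andP[Hy Hatt].
    case: (I3cases y) Hy Hatt => -> Hy.
    * by rewrite Hy in H0.
    * by rewrite /attacks /= !inE.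
    * by rewrite Hy in n2.
Qed.

Theorem proposition39 :
  forall x : semantics,
  exists (T : finType) (F F' : AF T),
    [/\ wf_AF F, wf_AF F', normal_exp F F' &
      ~ (forall E, sigma x F E ->
           exists E', sigma x F' E' /\ (~~ (E' \subset args F) \/ E' = E))].
Proof.
have key : forall E', E' = [set a0] -> ~ (~~ (E' \subset args F0) \/ E' = [set a1]).
  move=> E' -> [].
  - by apply/negP/negPn/subsetP=> y; rewrite !inE => /eqP->.
  - move/setP/(_ a0); by rewrite !inE.
case=> [|]; exists 'I_3, F0, F1; split; try exact: wf0; try exact: wf1;
  try exact: ne01.
- move/(_ [set a1] st0) => [E' [HE' Hor]]; exact: key (st1 HE') Hor.
- move=> H; have /H [E' [HE' Hor]] : stage2 F0 [set a1] by apply/(stage2_single _ mr0); exact: st0.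
  apply: key Hor; apply: st1; exact/(stage2_single _ mr1).
Qed.
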